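(* Let $0\le a<b$ and let $f:[a,b]\to[a,b]$ be a continuous map, with $[a,b]$ carrying the Euclidean metric. If $f$ has the shadowing property, then the set-valued map $F$ on $X=[-b,-a]\cup[a,b]$ defined by $F(x)=\{f(-x),-f(-x)\}$ for $x\in[-b,-a]$ and $F(x)=\{f(x),-f(x)\}$ for $x\in[a,b]$ also has the shadowing property.
   Context: A single-valued continuous map $f$ on a metric space $(Y,d)$ has the shadowing property if for every $\varepsilon>0$ there is $\delta>0$ such that for every sequence $\{x_n\}_{n\ge0}$ with $d(f(x_n),x_{n+1})<\delta$ for all $n$, there is $x\in Y$ with $d(f^n(x),x_n)<\varepsilon$ for all $n\ge 0$. For a set-valued map $F:X\to 2^X$ ($2^X$ = nonempty compact subsets), a $\delta$-pseudo-orbit is a sequence $\{x_n\}_{n\ge0}$ with $d(x_{n+1},F(x_n))<\delta$ for all $n$, and an $F$-orbit is a sequence $(y_n)_{n\ge0}$ with $y_{n+1}\in F(y_n)$ for all $n$; $F$ has the shadowing property if for every $\varepsilon>0$ there is $\delta>0$ such that for each $\delta$-pseudo-orbit $\{x_n\}$ there is an $F$-orbit $(y_n)$ with $d(x_n,y_n)<\varepsilon$ for all $n$. *)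

(* Defs.v *)
From Stdlib Require Import Reals.
Open Scope R_scope.

Definition inI (a b x : R) : Prop := a <= x <= b.

Definition maps_into (a b : R) (f : R -> R) : Prop :=
  forall x, inI a b x -> inI a b (f x).

Definition continuous_on_I (a b : R) (f : R -> R) : Prop :=
  forall x, inI a b x -> forall eps, 0 < eps -> exists delta, 0 < delta /\
    forall y, inI a b y -> Rabs (y - x) < delta -> Rabs (f y - f x) < eps.

Definition shadowing (Y : R -> Prop) (f : R -> R) : Prop :=
  forall eps, 0 < eps -> exists delta, 0 < delta /\
    forall xs : nat -> R, (forall n, Y (xs n)) ->
      (forall n, Rabs (f (xs n) - xs (S n)) < delta) ->
      exists x, Y x /\ forall n, Rabs (Nat.iter n f x - xs n) < eps.

(* Set-valued maps F : X -> 2^X are given by their membership relation: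
   F x y  means  y ∈ F(x).  Since every value F(x) is a nonempty compact set,
   d(z, F(x)) = inf_{y ∈ F(x)} |z - y| is attained, so d(z, F(x)) < delta
   iff some y ∈ F(x) has |z - y| < delta. *)
Definition sv_shadowing (X : R -> Prop) (F : R -> R -> Prop) : Prop :=
  forall eps, 0 < eps -> exists delta, 0 < delta /\
    forall xs : nat -> R, (forall n, X (xs n)) ->
      (forall n, exists y, F (xs n) y /\ Rabs (xs (S n) - y) < delta) ->
      exists ys : nat -> R, (forall n, X (ys n)) /\
        (forall n, F (ys n) (ys (S n))) /\
        (forall n, Rabs (xs n - ys n) < eps).

Definition symX (a b x : R) : Prop := inI (- b) (- a) x \/ inI a b x.

Definition symF (a b : R) (f : R -> R) (x y : R) : Prop :=
  (inI (- b) (- a) x /\ (y = f (- x) \/ y = - f (- x))) \/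
  (inI a b x /\ (y = f x \/ y = - f x)).

(* Main.v *)
Require Import Defs.
From Stdlib Require Import Reals Lra.
Open Scope R_scope.

Lemma iter_in a b f x n : maps_into a b f -> inI a b x -> inI a b (Nat.iter n f x).
Proof. intros Hm Hx; induction n; simpl; auto. Qed.

Lemma symF_abs a b f x y : 0 <= a -> maps_into a b f -> symF a b f x y ->
  Rabs y = f (Rabs x).
Proof.
  intros Ha Hm [[Hx Hy]|[Hx Hy]]; unfold inI in *.
  - assert (Hf := Hm (- x) ltac:(unfold inI; lra)). unfold inI in Hf.
    rewrite (Rabs_left1 x) by lra.
    destruct Hy; subst; [rewrite Rabs_right by lra | rewrite Rabs_left1 by lra]; lra.
  - assert (Hf := Hm x ltac:(unfold inI; lra)). unfold inI in Hf.
    rewrite (Rabs_right x) by lra.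
    destruct Hy; subst; [rewrite Rabs_right by lra | rewrite Rabs_left1 by lra]; lra.
Qed.

Theorem lemma3p17 (a b : R) (f : R -> R) :
  0 <= a -> a < b ->
  maps_into a b f -> continuous_on_I a b f ->
  shadowing (inI a b) f ->
  sv_shadowing (symX a b) (symF a b f).
Proof.
  intros Ha Hab Hm _ Hsh eps Heps.
  destruct (Hsh eps Heps) as [delta [Hd Hsh']].
  exists delta; split; auto.
  intros xs HX Hpo.
  assert (HZ : forall n, inI a b (Rabs (xs n))).
  { intro n; destruct (HX n) as [H|H]; unfold inI in *;
    [rewrite Rabs_left1 by lra | rewrite Rabs_right by lra]; lra. }
  destruct (Hsh' (fun n => Rabs (xs n)) HZ) as [x [Hx Hcl]].
  { intro n. destruct (Hpo n) as [y [Hy Hyd]].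
    rewrite <- (symF_abs a b f _ _ Ha Hm Hy).
    eapply Rle_lt_trans; [|exact Hyd].
    rewrite <- Rabs_Ropp. replace (- (Rabs y - Rabs (xs (S n)))) with
      (Rabs (xs (S n)) - Rabs y) by ring.
    apply Rabs_triang_inv2. }
  set (ys := fun n => if Rle_dec 0 (xs n) then Nat.iter n f x else - Nat.iter n f x).
  exists ys; split; [|split].
  - intro n. pose proof (iter_in a b f x n Hm Hx). unfold ys, symX, inI in *.
    destruct (Rle_dec 0 (xs n)); [right|left]; lra.
  - intro n. pose proof (iter_in a b f x n Hm Hx) as Hi.
    assert (Hfi : Nat.iter (S n) f x = f (Nat.iter n f x)) by reflexivity.
    unfold ys, symF, inI in *. rewrite Hfi.
    destruct (Rle_dec 0 (xs n)); destruct (Rle_dec 0 (xs (S n))).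
    + right; split; [lra | left; reflexivity].
    + right; split; [lra | right; reflexivity].
    + left; split; [lra | left; rewrite Ropp_involutive; reflexivity].
    + left; split; [lra | right; rewrite Ropp_involutive; reflexivity].
  - intro n. specialize (Hcl n). unfold ys.
    destruct (Rle_dec 0 (xs n)).
    + rewrite (Rabs_right (xs n)) in Hcl by lra. rewrite <- Rabs_Ropp.
      replace (- (xs n - Nat.iter n f x)) with (Nat.iter n f x - xs n) by ring. exact Hcl.
    + rewrite (Rabs_left1 (xs n)) in Hcl by lra.
      replace (xs n - - Nat.iter n f x) with (Nat.iter n f x - - xs n) by ring. exact Hcl.
Qed.
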